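(* In the setting of the context, $f(a,b)=\rho(h_{ab})-\rho(h_a)-\rho(h_b)$ for all $a,b\in A$.
   Context: Conventions: $[x,y]=x^{-1}y^{-1}xy$; $G$ acts on $V$ on the right, $[v,g]=-v+vg$; $[X,Y]$ is the subgroup generated by commutators, $[X,Y,Z]=[[X,Y],Z]$; $A^\#=A\setminus\{1\}$. Setting: $G=\langle A,B\rangle$ is an abstract rank one group with unipotent subgroups $A,B$ (distinct nilpotent; for each $a\in A^\#$ some $b(a)\in B^\#$ with $B^a=A^{b(a)}$, and vice versa). $\mu_a=b(a^{-1})ab(a)^{-1}$, $H=\langle\mu_a\mu_c:a,c\in A^\#\rangle$. $V$ is a $\mathbb{Z}G$-module with $[V,A,A,A]=0$, $[V,G,G,G]\neq0$, $[V,G]=V$, $C_V(G)=0$. $A_0=C_A([V,A])\cap C_A(V/C_V(A))\neq1$. Fix $e\in A_0^\#$ (with $e=a^2$ for some $a\in A$ if $V$ has exponent 2 and $A$ is non-abelian), $\mu=\mu_{e^{-1}}$, $h_a=\mu\mu_a$ for $a\in A^\#$, $h_1=0$; $\rho(h)$ = restriction of $h\in H$ to $C_V(A)$, $\rho(h_1)=0$. $f:A\times A\to\mathrm{End}(C_V(A))$ is defined by $vf(a,b)=[v\mu,a,b]$ for $v\in C_V(A)$. *)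

(* Defs.v *)
(* V is a mathcomp zmodType; the (possibly infinite) group G
   is an explicit record, since MathComp only has finite groups. *)
From mathcomp Require Import all_boot all_algebra.
From Stdlib Require Import ClassicalEpsilon.
Set Implicit Arguments. Unset Strict Implicit. Unset Printing Implicit Defensive.
Import GRing.Theory.
Local Open Scope ring_scope.

Record group := Group {
  gcar :> Type;
  gmul : gcar -> gcar -> gcar;
  ginv : gcar -> gcar;
  gone : gcar;
  gmulA : forall x y z, gmul x (gmul y z) = gmul (gmul x y) z;
  gmul1 : forall x, gmul gone x = x;
  gmulV : forall x, gmul (ginv x) x = gone }.

Section GroupDefs.
Variable G : group.

Definition gcomm (x y : G) : G :=
  gmul (gmul (ginv x) (ginv y)) (gmul x y).

Definition is_subgroup (S : G -> Prop) : Prop :=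
  S (gone G) /\ (forall x y, S x -> S y -> S (gmul x y)) /\
  (forall x, S x -> S (ginv x)).

Inductive gen_grp (S : G -> Prop) : G -> Prop :=
  | gen_in x : S x -> gen_grp S x
  | gen_one : gen_grp S (gone G)
  | gen_mul x y : gen_grp S x -> gen_grp S y -> gen_grp S (gmul x y)
  | gen_inv x : gen_grp S x -> gen_grp S (ginv x).

Definition comm_grp (X Y : G -> Prop) : G -> Prop :=
  gen_grp (fun z => exists x y, X x /\ Y y /\ z = gcomm x y).

(* lower central series gamma_1(A) = A, gamma_{n+1}(A) = [gamma_n(A), A] *)
Fixpoint lower_central (A : G -> Prop) (n : nat) : G -> Prop :=
  match n with
  | 0 => A
  | n'.+1 => comm_grp (lower_central A n') A
  end.

Definition nilpotent_grp (A : G -> Prop) : Prop :=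
  exists n, forall x, lower_central A n x -> x = gone G.

Definition abelian_grp (A : G -> Prop) : Prop :=
  forall x y, A x -> A y -> gmul x y = gmul y x.

Definition is_gmodule (V : zmodType) (act : V -> G -> V) : Prop :=
  (forall g (v w : V), act (v + w) g = act v g + act w g) /\
  (forall v, act v (gone G) = v) /\
  (forall v g h, act v (gmul g h) = act (act v g) h).

Section Module.
Variables (V : zmodType) (act : V -> G -> V).

Definition vcomm (v : V) (g : G) : V := - v + act v g.

Inductive gen_add (S : V -> Prop) : V -> Prop :=
  | gadd_in v : S v -> gen_add S v
  | gadd_zero : gen_add S 0
  | gadd_add v w : gen_add S v -> gen_add S w -> gen_add S (v + w)
  | gadd_opp v : gen_add S v -> gen_add S (- v).

Definition Vcomm (X : V -> Prop) (Y : G -> Prop) : V -> Prop :=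
  gen_add (fun w => exists x y, X x /\ Y y /\ w = vcomm x y).

Definition Vall : V -> Prop := fun _ => True.
Definition Gall : G -> Prop := fun _ => True.

Definition CV (Y : G -> Prop) (v : V) : Prop := forall y, Y y -> act v y = v.

(* A_0 = C_A([V,A]) cap C_A(V/C_V(A)) *)
Definition A0 (A : G -> Prop) (a : G) : Prop :=
  A a /\ (forall w, Vcomm Vall A w -> act w a = w) /\
  (forall v, CV A (vcomm v a)).

Definition mu_ (bf : G -> G) (a : G) : G :=
  gmul (gmul (bf (ginv a)) a) (ginv (bf a)).

(* v rho(h_x), with h_x = mu mu_x, mu = mu_{e^-1}, and rho(h_1) = 0 *)
Definition rho_h (bf : G -> G) (e : G) (x : G) (v : V) : V :=
  if excluded_middle_informative (x = gone G) then 0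
  else act v (gmul (mu_ bf (ginv e)) (mu_ bf x)).

Definition f_ab (bf : G -> G) (e : G) (a b : G) (v : V) : V :=
  vcomm (vcomm (act v (mu_ bf (ginv e))) a) b.

End Module.
End GroupDefs.

(* Main.v *)
Require Import Defs.
From mathcomp Require Import all_boot all_algebra.
From Stdlib Require Import ClassicalEpsilon.
Import GRing.Theory.
Local Open Scope ring_scope.
Set Implicit Arguments. Unset Strict Implicit.

Lemma gmulVr (G : group) (x : G) : gmul x (ginv x) = gone G.
Proof.
rewrite -{1}(gmul1 (gmul x (ginv x))) -{1}(gmulV (ginv x)).
by rewrite -gmulA (gmulA (ginv x) x) gmulV gmul1 gmulV.
Qed.

Lemma gmul1r (G : group) (x : G) : gmul x (gone G) = x.
Proof. by rewrite -(gmulV x) gmulA gmulVr gmul1. Qed.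

Lemma gmulKV (G : group) (x y : G) : gmul (gmul x y) (ginv y) = x.
Proof. by rewrite -gmulA gmulVr gmul1r. Qed.

Lemma gmulVK (G : group) (x y : G) : gmul (gmul x (ginv y)) y = x.
Proof. by rewrite -gmulA gmulV gmul1r. Qed.

Lemma ginvK (G : group) (x : G) : ginv (ginv x) = x.
Proof.
rewrite -(gmul1r (ginv (ginv x))) -(gmulV x) gmulA gmulV gmul1 //.
Qed.

Lemma ginv_uniq (G : group) (x y : G) : gmul x y = gone G -> ginv x = y.
Proof. by move=> h; rewrite -(gmul1r (ginv x)) -h gmulA gmulV gmul1. Qed.

Lemma ginvM (G : group) (x y : G) : ginv (gmul x y) = gmul (ginv y) (ginv x).
Proof. by apply: ginv_uniq; rewrite !gmulA gmulKV gmulVr. Qed.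

Lemma ginv1 (G : group) : ginv (gone G) = gone G.
Proof. by apply: ginv_uniq; rewrite gmul1. Qed.

Lemma N2 (G : group) (A B : G -> Prop) (bf : G -> G)
  (hA : is_subgroup A) (hB : is_subgroup B)
  (hbf : forall a, A a -> a <> gone G ->
     B (bf a) /\ bf a <> gone G /\
     (forall y, B (gmul (gmul a y) (ginv a)) <->
                A (gmul (gmul (bf a) y) (ginv (bf a))))) :
  forall x a, A x -> x <> gone G -> A a ->
  B (gmul (gmul (mu_ bf x) a) (ginv (mu_ bf x))).
Proof.
move=> x a Ax x1 Aa.
have [hB1 [hBm hBi]] := hB.
have [hA1 [hAm hAi]] := hA.
have Ax' : A (ginv x) by apply: hAi.
have x1' : ginv x <> gone G by move=> h; apply: x1; rewrite -(ginvK x) h ginv1.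
have [Bb [_ hb]] := hbf x Ax x1.
have [Bb' _] := hbf (ginv x) Ax' x1'.
have Hy : B (gmul (gmul x (gmul (gmul (ginv (bf x)) a) (bf x))) (ginv x)).
  by apply/hb; rewrite !gmulA gmulVr gmul1 gmulKV.
rewrite /mu_.
have -> : gmul (gmul (gmul (gmul (bf (ginv x)) x) (ginv (bf x))) a)
  (ginv (gmul (gmul (bf (ginv x)) x) (ginv (bf x)))) =
  gmul (gmul (bf (ginv x)) (gmul (gmul x (gmul (gmul (ginv (bf x)) a) (bf x))) (ginv x)))
     (ginv (bf (ginv x))).
  by rewrite !ginvM !ginvK !gmulA.
by apply: (hBm); [apply: (hBm)|apply: (hBi)].
Qed.

Lemma N1 (G : group) (A B : G -> Prop) (bf : G -> G)
  (hA : is_subgroup A) (hB : is_subgroup B)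
  (hbf : forall a, A a -> a <> gone G ->
     B (bf a) /\ bf a <> gone G /\
     (forall y, B (gmul (gmul a y) (ginv a)) <->
                A (gmul (gmul (bf a) y) (ginv (bf a))))) :
  forall x b, A x -> x <> gone G -> B b ->
  A (gmul (gmul (mu_ bf x) b) (ginv (mu_ bf x))).
Proof.
move=> x b Ax x1 Bb.
have [hB1 [hBm hBi]] := hB.
have [hA1 [hAm hAi]] := hA.
have Ax' : A (ginv x) by apply: hAi.
have x1' : ginv x <> gone G by move=> h; apply: x1; rewrite -(ginvK x) h ginv1.
have [Bbx _] := hbf x Ax x1.
have [_ [_ hb']] := hbf (ginv x) Ax' x1'.
have Hy := proj1 (hb' (gmul (gmul x (gmul (gmul (ginv (bf x)) b) (bf x))) (ginv x))).
rewrite /mu_.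
have -> : gmul (gmul (gmul (gmul (bf (ginv x)) x) (ginv (bf x))) b)
  (ginv (gmul (gmul (bf (ginv x)) x) (ginv (bf x)))) =
  gmul (gmul (bf (ginv x)) (gmul (gmul x (gmul (gmul (ginv (bf x)) b) (bf x))) (ginv x)))
     (ginv (bf (ginv x))).
  by rewrite !ginvM !ginvK !gmulA.
apply: Hy.
rewrite ginvK !gmulA gmulV gmul1 gmulVK.
by apply: (hBm); [apply: (hBm); [apply: (hBi)|]|].
Qed.

Lemma zid (V : zmodType) (p q r s : V) :
  - (- p + q) + (- r + s) = (- p + s) - (- p + q) - (- p + r).
Proof.
rewrite !opprD !opprK (addrACA (-p) s p (-q)) addNr add0r.
by rewrite (addrACA p) (addrC (p - r)) (addrC (-q) s).
Qed.

Theorem proposition4p4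
  (G : group) (A B : G -> Prop) (bf : G -> G)
  (V : zmodType) (act : V -> G -> V) (e : G)
  (hA : is_subgroup A) (hB : is_subgroup B)
  (nA : nilpotent_grp A) (nB : nilpotent_grp B)
  (hAB : ~ (forall x, A x <-> B x))
  (hgen : forall x : G, gen_grp (fun y => A y \/ B y) x)
  (hbf : forall a, A a -> a <> gone G ->
     B (bf a) /\ bf a <> gone G /\
     (forall y, B (gmul (gmul a y) (ginv a)) <->
                A (gmul (gmul (bf a) y) (ginv (bf a)))))
  (hab : forall b, B b -> b <> gone G ->
     exists a, A a /\ a <> gone G /\
     (forall y, A (gmul (gmul b y) (ginv b)) <->
                B (gmul (gmul a y) (ginv a))))
  (hV : is_gmodule act)
  (hVAAA : forall v, Vcomm act (Vcomm act (Vcomm act (@Vall V) A) A) A v -> v = 0)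
  (hVGGG : exists v, Vcomm act (Vcomm act (Vcomm act (@Vall V) (@Gall G)) (@Gall G)) (@Gall G) v
                     /\ v <> 0)
  (hVG : forall v, Vcomm act (@Vall V) (@Gall G) v)
  (hCVG : forall v, CV act (@Gall G) v -> v = 0)
  (hA0 : exists a, A0 act A a /\ a <> gone G)
  (he : A0 act A e) (he1 : e <> gone G)
  (he2 : (forall v : V, v + v = 0) -> ~ abelian_grp A ->
         exists a, A a /\ e = gmul a a) :
  forall a b, A a -> A b -> forall v, CV act A v ->
    f_ab act bf e a b v =
    rho_h act bf e (gmul a b) v - rho_h act bf e a v - rho_h act bf e b v.
Proof.
move=> a b Aa Ab v Uv.
have [hadd [h1 hcomp]] := hV.
have [hA1 [hAm hAi]] := hA.
have [hB1 [hBm hBi]] := hB.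
have act0 : forall g, act 0 g = 0.
  move=> g; have h := hadd g 0 0; rewrite addr0 in h.
  by apply: (addrI (act 0 g)); rewrite -h addr0.
have actN : forall g x, act (- x) g = - act x g.
  by move=> g x; apply: (addrI (act x g)); rewrite -hadd !subrr act0.
have actK' : forall x g, act (act x g) (ginv g) = x.
  by move=> x g; rewrite -hcomp gmulVr h1.
have zero_of : forall z, (forall x, A x -> act z x = z) ->
    (forall y, B y -> act z y = z) -> z = 0.
  move=> z hzA hzB; apply: hCVG => g _.
  elim: (hgen g) => [x [Ax|Bx]| |x y _ hx _ hy|x _ hx].
  - by apply: hzA.
  - by apply: hzB.
  - exact: h1.
  - by rewrite hcomp hx hy.
  - by rewrite -{1}hx actK'.
have Ae : A e by case: he.
have Ac : A (ginv e) by apply: hAi.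
have c1 : ginv e <> gone G by move=> h; apply: he1; rewrite -(ginvK e) h ginv1.
have muinv : ginv (mu_ bf (ginv e)) = mu_ bf e.
  by rewrite /mu_ !ginvM !ginvK !gmulA.
pose e' := gmul (gmul (mu_ bf e) e) (ginv (mu_ bf e)).
have Be' : B e' by apply: (N2 hA hB hbf).
have e'1 : e' <> gone G.
  move=> h; apply: he1.
  have -> : e = gmul (gmul (ginv (mu_ bf e)) e') (mu_ bf e).
    by rewrite /e'; move: (mu_ bf e) => m; rewrite !gmulA gmulV gmul1 gmulVK.
  by rewrite h gmul1r gmulV.
have P1 : forall t, Vcomm act (@Vall V) B t -> act t e' = t.
  move=> t Ht; elim: Ht => [_ [x [y [_ [By ->]]]] | | u1 u2 _ h1' _ h2' | u _ h'].
  - rewrite /e' hcomp hcomp.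
    have Aa' : A (gmul (gmul (ginv (mu_ bf e)) y) (mu_ bf e)).
      by rewrite -muinv ginvK; apply: (N1 hA hB hbf).
    have Heq : act (vcomm act x y) (mu_ bf e) =
        vcomm act (act x (mu_ bf e)) (gmul (gmul (ginv (mu_ bf e)) y) (mu_ bf e)).
      rewrite /vcomm hadd actN -!hcomp; congr (_ + act x _).
      by move: (mu_ bf e) => m; rewrite !gmulA gmulVr gmul1.
    rewrite Heq (proj1 (proj2 he)); first by rewrite -Heq actK'.
    by apply: gadd_in; exists (act x (mu_ bf e)), (gmul (gmul (ginv (mu_ bf e)) y) (mu_ bf e)).
  - by rewrite act0.
  - by rewrite hadd h1' h2'.
  - by rewrite actN h'.
clearbody e'.
have zero_e' : forall z, (forall x, A x -> act z x = z) -> act z e' = z -> z = 0.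
  move=> z hzA hze; have [a0 [Aa0 [_ ha0]]] := hab e' Be' e'1.
  apply: zero_of => // y By.
  have Hx0 := proj2 (ha0 (gmul (gmul (ginv a0) y) a0)).
  have Ax0 : A (gmul (gmul e' (gmul (gmul (ginv a0) y) a0)) (ginv e')).
    by apply: Hx0; rewrite !gmulA gmulVr gmul1 gmulKV.
  have hzm : act z (gmul (gmul (ginv a0) y) a0) = z.
    have -> : gmul (gmul (ginv a0) y) a0 = gmul (gmul (ginv e')
       (gmul (gmul e' (gmul (gmul (ginv a0) y) a0)) (ginv e'))) e'.
      by move: (gmul (gmul (ginv a0) y) a0) => m; rewrite !gmulA gmulV gmul1 gmulVK.
    by rewrite hcomp hcomp -{1}hze actK' (hzA _ Ax0).
  have -> : y = gmul (gmul a0 (gmul (gmul (ginv a0) y) a0)) (ginv a0).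
    by rewrite !gmulA gmulVr gmul1 gmulKV.
  by rewrite hcomp hcomp (hzA _ Aa0) hzm hzA //; apply: hAi.
pose w := act v (mu_ bf (ginv e)).
have wB : forall y, B y -> act w y = w.
  move=> y By; rewrite /w -hcomp.
  have -> : gmul (mu_ bf (ginv e)) y = gmul (gmul (gmul (mu_ bf (ginv e)) y)
      (ginv (mu_ bf (ginv e)))) (mu_ bf (ginv e)) by rewrite gmulVK.
  by rewrite hcomp (Uv _ (N1 hA hB hbf Ac c1 By)).
have Rn : forall x, x <> gone G -> rho_h act bf e x v = act w (mu_ bf x).
  move=> x x1; rewrite /rho_h.
  destruct (excluded_middle_informative (x = gone G)) as [h|hn]; first by case: x1.
  by rewrite hcomp.
have R1 : forall x, x = gone G -> rho_h act bf e x v = 0.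
  move=> x x1; rewrite /rho_h.
  by destruct (excluded_middle_informative (x = gone G)).
have RA : forall x y, A x -> A y -> act (rho_h act bf e x v) y = rho_h act bf e x v.
  move=> x y Ax Ay; case: (excluded_middle_informative (x = gone G)) => [x1|x1].
  - by rewrite R1 // act0.
  rewrite Rn // -hcomp.
  have -> : gmul (mu_ bf x) y = gmul (gmul (gmul (mu_ bf x) y) (ginv (mu_ bf x)))
     (mu_ bf x) by rewrite gmulVK.
  by rewrite hcomp wB //; apply: (N2 hA hB hbf).
pose T := fun t => act t e' - t.
have TD : forall x y, T (x + y) = T x + T y.
  by move=> x y; rewrite /T hadd opprD addrACA.
have TN : forall x, T (- x) = - T x.
  by move=> x; rewrite /T actN opprK opprB addrC.
have RT : forall x, A x -> T (rho_h act bf e x v) = T (vcomm act w x).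
  move=> x Ax; case: (excluded_middle_informative (x = gone G)) => [x1|x1].
  - by rewrite R1 // /vcomm x1 h1 addNr.
  have Ax' : A (ginv x) by apply: hAi.
  have x1' : ginv x <> gone G by move=> h; apply: x1; rewrite -(ginvK x) h ginv1.
  have [Bbx _] := hbf x Ax x1.
  have [Bbx' _] := hbf (ginv x) Ax' x1'.
  have wx : act w x = rho_h act bf e x v + vcomm act (rho_h act bf e x v) (bf x).
    rewrite /vcomm addNKr Rn // -hcomp.
    have -> : gmul (mu_ bf x) (bf x) = gmul (bf (ginv x)) x by rewrite /mu_ gmulVK.
    by rewrite hcomp (wB _ Bbx').
  rewrite /vcomm wx -/(vcomm act _ _) TD TN TD.
  have -> : T w = 0 by rewrite /T wB // subrr.
  have -> : T (vcomm act (rho_h act bf e x v) (bf x)) = 0.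
    rewrite /T P1 ?subrr //.
    by apply: gadd_in; exists (rho_h act bf e x v), (bf x).
  by rewrite oppr0 add0r addr0.
have HF : vcomm act (vcomm act w a) b = vcomm act w (gmul a b) - vcomm act w a - vcomm act w b.
  by rewrite /vcomm hadd actN hcomp zid.
have Aab : A (gmul a b) by apply: hAm.
rewrite /f_ab -/w.
apply: subr0_eq; apply: zero_e'.
- move=> y Ay.
  have Ffix : act (vcomm act (vcomm act w a) b) y = vcomm act (vcomm act w a) b.
    have h0 := hVAAA (vcomm act (vcomm act (vcomm act w a) b) y).
    move: h0; rewrite /vcomm => h0.
    apply/eqP; rewrite -subr_eq0 addrC; apply/eqP; apply: h0.
    apply: gadd_in; exists (- (- w + act w a) + act (- w + act w a) b), y; split => //.
    apply: gadd_in; exists (- w + act w a), b; split => //.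
    by apply: gadd_in; exists w, a.
  move: Ffix; move: (vcomm act (vcomm act w a) b) => F Ffix.
  by rewrite !(hadd, actN) Ffix !RA.
- apply/eqP; rewrite -subr_eq0; apply/eqP; rewrite -/(T _).
  have E1 := RT _ Aab; have E2 := RT _ Aa; have E3 := RT _ Ab.
  rewrite HF; move: E1 E2 E3.
  move: (rho_h act bf e (gmul a b) v) (rho_h act bf e a v) (rho_h act bf e b v).
  move: (vcomm act w (gmul a b)) (vcomm act w a) (vcomm act w b).
  move=> p q s r1 r2 r3 E1 E2 E3.
  by rewrite !(TD, TN) E1 E2 E3 subrr.
Qed.
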